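(* The $3N$ functions $E_m^{(k)}$ ($k=1,2,3$; $m=0,1,\dots,N-1$) are functionally independent on a dense open subset of $\mathbb R^{6N}$; that is, there is a dense open subset of $\mathbb R^{6N}$ at every point of which the Jacobian matrix of $(E_0^{(1)},\dots,E_{N-1}^{(1)},E_0^{(2)},\dots,E_{N-1}^{(2)},E_0^{(3)},\dots,E_{N-1}^{(3)})$ with respect to the $6N$ real coordinates $(\operatorname{Re}\phi_{j\alpha},\operatorname{Im}\phi_{j\alpha})$ has rank $3N$.
   Context: Fix $N\ge1$ and distinct nonzero real $\lambda_1,\dots,\lambda_N$. Phase space $\mathbb C^{3N}\cong\mathbb R^{6N}$ with complex coordinates $\phi_{j\alpha}$ ($j=1,2,3$, $\alpha=1,\dots,N$). $L(\lambda)=C+\sum_\alpha(\lambda-\lambda_\alpha)^{-1}F_\alpha F_\alpha^*$ with $C=\operatorname{diag}(1,-1,0)$, $F_\alpha=(\phi_{1\alpha},\phi_{2\alpha},\phi_{3\alpha})^T$. Define $p_1,p_2,p_3$ by $\det(\xi I-L(\lambda))=\xi^3-p_1(\lambda)\xi^2+p_2(\lambda)\xi-p_3(\lambda)$, and $E_m^{(k)}$ by the Laurent expansion $p_k(\lambda)=\sum_{m=-1}^\infty E_m^{(k)}\lambda^{-m-1}$ for $|\lambda|>\max_\alpha|\lambda_\alpha|$. Each $E_m^{(k)}$ is a real-valued polynomial function of $\phi_{j\alpha},\bar\phi_{j\alpha}$. *)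

(* Defs.v *)
From mathcomp Require Import all_boot all_order all_algebra.
From mathcomp Require Import complex.
From mathcomp Require Import all_classical all_reals all_analysis.
From mathcomp Require Import zify.
Set Implicit Arguments. Unset Strict Implicit. Unset Printing Implicit Defensive.
Import Order.TTheory GRing.Theory Num.Theory.
Local Open Scope ring_scope.

(* Real coordinate index of (Re phi_{j a}) (b = 0) and (Im phi_{j a}) (b = 1)
   in R^{6N}: value b + 2*(a + N*j). This is a bijection 'I_3*'I_N*'I_2 -> 'I_(6N). *)
Lemma coord_idx_lt (N : nat) (j : 'I_3) (a : 'I_N) (b : 'I_2) :
  (b + 2 * (a + N * j) < 6 * N)%N.
Proof. have := ltn_ord j; have := ltn_ord a; have := ltn_ord b. nia. Qed.

Definition coord_idx (N : nat) (j : 'I_3) (a : 'I_N) (b : 'I_2) : 'I_(6 * N) :=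
  Ordinal (coord_idx_lt j a b).

Section Gaudin.
Variables (R : realType) (N : nat) (lam : 'I_N -> R).

Definition phi (x : 'rV[R]_(6 * N)) (j : 'I_3) (a : 'I_N) : R[i] :=
  Complex (x 0 (coord_idx j a 0)) (x 0 (coord_idx j a 1)).

Definition Cmat : 'M[R[i]]_3 :=
  \matrix_(i, j) (if i == j then
                    (if (i : nat) == 0%N then 1 else if (i : nat) == 1%N then -1 else 0)
                  else 0).

Definition FFstar (x : 'rV[R]_(6 * N)) (a : 'I_N) : 'M[R[i]]_3 :=
  \matrix_(i, j) (phi x i a * (phi x j a)^*).

(* A_n = sum_a lam_a^n F_a F_a^*, so that for |lam| > max |lam_a|,
   L(lam) = C + sum_{n>=0} lam^{-n-1} A_n  (geometric expansion). *)
Definition Amat (x : 'rV[R]_(6 * N)) (n : nat) : 'M[R[i]]_3 :=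
  \sum_(a < N) (((lam a ^+ n)%:C)%C *: FFstar x a).

(* L as a formal power series in t = 1/lam, truncated after t^K:
   C + sum_{n < K} t^(n+1) A_n, a matrix over {poly R[i]} (variable t = 'X). *)
Definition Ltrunc (x : 'rV[R]_(6 * N)) (K : nat) : 'M[{poly R[i]}]_3 :=
  \matrix_(i, j) ((Cmat i j)%:P + \sum_(n < K) (Amat x n i j)%:P * 'X^(n.+1)).

(* p_k(t) from det(xi I - L) = xi^3 - p1 xi^2 + p2 xi - p3, i.e.
   p_k = (-1)^k * (coefficient of xi^(3-k) in char_poly L). *)
Definition pk (x : 'rV[R]_(6 * N)) (K k : nat) : {poly R[i]} :=
  (-1) ^+ k * (char_poly (Ltrunc x K))`_(3 - k).

(* E_m^{(k)}: coefficient of lam^{-m-1} = t^(m+1) in p_k.  Truncation at K = m+1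
   terms (n = 0..m) does not affect the coefficient of t^(m+1).  The value is
   real; we take its real part to obtain an R-valued function. *)
Definition E (k m : nat) (x : 'rV[R]_(6 * N)) : R :=
  complex.Re ((pk x m.+1 k)`_m.+1).

(* Jacobian of (E_0^(1),..,E_{N-1}^(1),E_0^(2),..,E_{N-1}^(3)) w.r.t. the 6N real
   coordinates: row r <-> (k, m) = ((r %/ N).+1, r %% N). *)
Definition Ejacobian (x : 'rV[R]_(6 * N)) : 'M[R]_(3 * N, 6 * N) :=
  \matrix_(r, c) ('D_('e_c) (E ((r : nat) %/ N).+1 ((r : nat) %% N)) x).

End Gaudin.

(* Main.v *)
Require Import Defs.
From mathcomp Require Import all_boot all_order all_algebra.
From mathcomp Require Import complex.
From mathcomp Require Import all_classical all_reals all_analysis.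
From mathcomp Require Import ring lra zify.
Set Implicit Arguments. Unset Strict Implicit. Unset Printing Implicit Defensive.
Import Order.TTheory GRing.Theory Num.Theory.
Import numFieldNormedType.Exports.
Local Open Scope ring_scope.
Local Open Scope classical_set_scope.
Section IsPoly.
Variables (R : realType) (n : nat).
Notation V := 'rV[R]_n.

Inductive ispoly : (V -> R) -> Prop :=
| ipC c : ispoly (fun _ => c)
| ipX c : ispoly (fun x => x 0 c)
| ipD f g : ispoly f -> ispoly g -> ispoly (fun x => f x + g x)
| ipM f g : ispoly f -> ispoly g -> ispoly (fun x => f x * g x).

Lemma ip_ext f g : ispoly f -> f =1 g -> ispoly g.
Proof. by move=> pf /funext <-. Qed.

Lemma ipN f : ispoly f -> ispoly (fun x => - f x).
Proof. move=> pf; apply: ip_ext (ipM (ipC (-1)) pf) _ => x; by rewrite mulN1r. Qed.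

Lemma ipB f g : ispoly f -> ispoly g -> ispoly (fun x => f x - g x).
Proof. by move=> pf pg; apply: ipD pf (ipN pg). Qed.

Lemma ip_sum (I : Type) (r : seq I) (P : pred I) (F : I -> V -> R) :
  (forall i, ispoly (F i)) -> ispoly (fun x => \sum_(i <- r | P i) F i x).
Proof.
move=> hF; elim: r => [|a r ih].
  by apply: ip_ext (ipC 0) _ => x; rewrite big_nil.
case Pa: (P a).
  by apply: ip_ext (ipD (hF a) ih) _ => x; rewrite big_cons Pa.
by apply: ip_ext ih _ => x; rewrite big_cons Pa.
Qed.

Lemma ip_prod (I : Type) (r : seq I) (P : pred I) (F : I -> V -> R) :
  (forall i, ispoly (F i)) -> ispoly (fun x => \prod_(i <- r | P i) F i x).
Proof.
move=> hF; elim: r => [|a r ih].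
  by apply: ip_ext (ipC 1) _ => x; rewrite big_nil.
case Pa: (P a).
  by apply: ip_ext (ipM (hF a) ih) _ => x; rewrite big_cons Pa.
by apply: ip_ext ih _ => x; rewrite big_cons Pa.
Qed.

Lemma ip_line f : ispoly f -> forall x v : V, exists q : {poly R},
  forall s : R, f (s *: v + x) = q.[s].
Proof.
elim=> [c|c|f1 f2 _ ih1 _ ih2|f1 f2 _ ih1 _ ih2] x v.
- by exists c%:P => s; rewrite hornerC.
- exists ((x 0 c)%:P + (v 0 c)%:P * 'X) => s.
  by rewrite !mxE hornerD hornerC hornerM hornerC hornerX addrC mulrC.
- have [q1 h1] := ih1 x v; have [q2 h2] := ih2 x v.
  by exists (q1 + q2) => s; rewrite h1 h2 hornerD.
- have [q1 h1] := ih1 x v; have [q2 h2] := ih2 x v.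
  by exists (q1 * q2) => s; rewrite h1 h2 hornerM.
Qed.

Lemma line_derive (f : V -> R) (x v : V) (q : {poly R}) :
  (forall s : R, f (s *: v + x) = q.[s]) ->
  derivable f x v /\ 'D_v f x = q`_1.
Proof.
move=> hq.
have e : (fun h : R => f (h *: v + x)) = horner q by apply/funext => s; rewrite hq.
split; first by apply/derivable1P; rewrite e; exact: derivable_horner.
have -> : 'D_v f x = 'D_1 (horner q) 0.
  rewrite /derive.
  have -> : (fun h : R => h^-1 *: (f (h *: v + x) - f x)) =
            (fun h : R => h^-1 *: (horner q (h *: 1 + 0) - horner q 0)).
    apply/funext => h; rewrite -e /= scale0r add0r.
    by rewrite addr0 [h *: 1]mulr1.
  by [].
rewrite (@derive_val _ _ _ _ _ _ _ (is_derive_poly q 0)).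
by rewrite horner_coef0 coef_deriv mulr1n.
Qed.

Lemma ip_derivable f : ispoly f -> forall x v, derivable f x v.
Proof.
move=> pf x v; have [q hq] := ip_line pf x v.
exact: (line_derive hq).1.
Qed.

Lemma ip_deriv f : ispoly f -> forall v, ispoly (fun x => 'D_v f x).
Proof.
elim=> [c|c|f1 f2 p1 ih1 p2 ih2|f1 f2 p1 ih1 p2 ih2] v.
- apply: ip_ext (ipC 0) _ => x.
  have h : forall s : R, (fun _ : V => c) (s *: v + x) = c%:P.[s].
    by move=> s; rewrite hornerC.
  have [_ hd] := line_derive (f := fun _ : V => c) (x := x) (v := v) h; rewrite /= hd.
  by rewrite coefC.
- apply: ip_ext (ipC (v 0 c)) _ => x.
  have h : forall s : R, (fun x : V => x 0 c) (s *: v + x) =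
     ((x 0 c)%:P + (v 0 c)%:P * 'X).[s].
    by move=> s; rewrite !mxE hornerD hornerC hornerM hornerC hornerX addrC mulrC.
  have [_ hd] := line_derive (f := fun x : V => x 0 c) (x := x) (v := v) h; rewrite /= hd.
  by rewrite coefD coefC coefCM coefX /= add0r mulr1.
- apply: ip_ext (ipD (ih1 v) (ih2 v)) _ => x.
  have d1 : derivable f1 x v by apply: ip_derivable. have d2 : derivable f2 x v by apply: ip_derivable.
  have -> : (fun x => f1 x + f2 x) = (f1 + f2) by [].
  by rewrite deriveD.
- apply: ip_ext (ipD (ipM p1 (ih2 v)) (ipM p2 (ih1 v))) _ => x.
  have d1 : derivable f1 x v by apply: ip_derivable. have d2 : derivable f2 x v by apply: ip_derivable.
  have -> : (fun x => f1 x * f2 x) = (f1 * f2) by [].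
  by rewrite deriveM.
Qed.

Lemma ip_cont f : ispoly f -> continuous f.
Proof.
elim=> [c|c|f1 f2 _ ih1 _ ih2|f1 f2 _ ih1 _ ih2].
- exact: cst_continuous.
- by move=> x; exact: coord_continuous.
- by move=> x; apply: (cvgD (ih1 x) (ih2 x)).
- by move=> x; apply: (cvgM (ih1 x) (ih2 x)).
Qed.

End IsPoly.
Lemma ReM (R : realType) (a b : R[i]) :
  complex.Re (a * b) = complex.Re a * complex.Re b - complex.Im a * complex.Im b.
Proof. by case: a => ? ?; case: b => ? ?. Qed.
Lemma ImM (R : realType) (a b : R[i]) :
  complex.Im (a * b) = complex.Re a * complex.Im b + complex.Im a * complex.Re b.
Proof. by case: a => ? ?; case: b => ? ?. Qed.
Lemma Reconj (R : realType) (a : R[i]) : complex.Re (a^*) = complex.Re a.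
Proof. by case: a => ? ?. Qed.
Lemma Imconj (R : realType) (a : R[i]) : complex.Im (a^*) = - complex.Im a.
Proof. by case: a => ? ?. Qed.

Section CPoly.
Variables (R : realType) (n : nat).
Notation V := 'rV[R]_n.

Definition cp (f : V -> R[i]) :=
  ispoly (fun x => complex.Re (f x)) /\ ispoly (fun x => complex.Im (f x)).

Lemma cp_ext f g : cp f -> f =1 g -> cp g.
Proof. by move=> pf /funext <-. Qed.

Lemma cpC c : cp (fun _ => c).
Proof. by split; apply: ipC. Qed.

Lemma cpD f g : cp f -> cp g -> cp (fun x => f x + g x).
Proof.
move=> [f1 f2] [g1 g2]; split.
  by apply: ip_ext (ipD f1 g1) _ => x; rewrite raddfD.
by apply: ip_ext (ipD f2 g2) _ => x; rewrite raddfD.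
Qed.

Lemma cpM f g : cp f -> cp g -> cp (fun x => f x * g x).
Proof.
move=> [f1 f2] [g1 g2]; split.
  by apply: ip_ext (ipB (ipM f1 g1) (ipM f2 g2)) _ => x; rewrite ReM.
by apply: ip_ext (ipD (ipM f1 g2) (ipM f2 g1)) _ => x; rewrite ImM.
Qed.

Lemma cpN f : cp f -> cp (fun x => - f x).
Proof. move=> pf; apply: cp_ext (cpM (cpC (-1)) pf) _ => x; by rewrite mulN1r. Qed.

Lemma cp_conj f : cp f -> cp (fun x => (f x)^*).
Proof.
move=> [f1 f2]; split.
  by apply: ip_ext f1 _ => x; rewrite Reconj.
by apply: ip_ext (ipN f2) _ => x; rewrite Imconj.
Qed.

Lemma cp_sum (I : Type) (r : seq I) (P : pred I) (F : I -> V -> R[i]) :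
  (forall i, cp (F i)) -> cp (fun x => \sum_(i <- r | P i) F i x).
Proof.
move=> hF; elim: r => [|a r ih].
  by apply: cp_ext (cpC 0) _ => x; rewrite big_nil.
case Pa: (P a).
  by apply: cp_ext (cpD (hF a) ih) _ => x; rewrite big_cons Pa.
by apply: cp_ext ih _ => x; rewrite big_cons Pa.
Qed.

Definition pp (f : V -> {poly R[i]}) := forall i, cp (fun x => (f x)`_i).

Lemma pp_ext f g : pp f -> f =1 g -> pp g.
Proof. by move=> pf /funext <-. Qed.

Lemma ppK c : pp (fun _ => c).
Proof. by move=> i; apply: cpC. Qed.

Lemma ppC f : cp f -> pp (fun x => (f x)%:P).
Proof.
move=> pf i; case: i => [|i].
  by apply: cp_ext pf _ => x; rewrite coefC.
by apply: cp_ext (cpC 0) _ => x; rewrite coefC.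
Qed.

Lemma ppD f g : pp f -> pp g -> pp (fun x => f x + g x).
Proof. move=> pf pg i; apply: cp_ext (cpD (pf i) (pg i)) _ => x; by rewrite coefD. Qed.

Lemma ppN f : pp f -> pp (fun x => - f x).
Proof. move=> pf i; apply: cp_ext (cpN (pf i)) _ => x; by rewrite coefN. Qed.

Lemma ppB f g : pp f -> pp g -> pp (fun x => f x - g x).
Proof. by move=> pf pg; apply: ppD pf (ppN pg). Qed.

Lemma ppM f g : pp f -> pp g -> pp (fun x => f x * g x).
Proof.
move=> pf pg i.
have -> : (fun x => (f x * g x)`_i) =
  (fun x => \sum_(j < i.+1) (f x)`_j * (g x)`_(i - j)).
  by apply/funext => x; rewrite coefM.
by apply: cp_sum => j; apply: cpM.
Qed.

Lemma pp_sum (I : Type) (r : seq I) (P : pred I) (F : I -> V -> {poly R[i]}) :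
  (forall i, pp (F i)) -> pp (fun x => \sum_(i <- r | P i) F i x).
Proof.
move=> hF; elim: r => [|a r ih].
  by apply: pp_ext (ppK 0) _ => x; rewrite big_nil.
case Pa: (P a).
  by apply: pp_ext (ppD (hF a) ih) _ => x; rewrite big_cons Pa.
by apply: pp_ext ih _ => x; rewrite big_cons Pa.
Qed.

End CPoly.
Section Char3.
Variable S : comNzRingType.

Definition i0 : 'I_3 := @Ordinal 3 0 isT.
Definition i1 : 'I_3 := @Ordinal 3 1 isT.
Definition i2 : 'I_3 := @Ordinal 3 2 isT.

Definition tr3 (M : 'M[S]_3) := M i0 i0 + M i1 i1 + M i2 i2.
Definition e23 (M : 'M[S]_3) :=
  (M i0 i0 * M i1 i1 - M i0 i1 * M i1 i0) + (M i0 i0 * M i2 i2 - M i0 i2 * M i2 i0)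
  + (M i1 i1 * M i2 i2 - M i1 i2 * M i2 i1).
Definition det3 (M : 'M[S]_3) :=
  M i0 i0 * (M i1 i1 * M i2 i2 - M i1 i2 * M i2 i1)
  - M i0 i1 * (M i1 i0 * M i2 i2 - M i1 i2 * M i2 i0)
  + M i0 i2 * (M i1 i0 * M i2 i1 - M i1 i1 * M i2 i0).

Lemma det3E (M : 'M[S]_3) : \det M = det3 M.
Proof.
rewrite (expand_det_row _ i0) !big_ord_recl big_ord0 /cofactor.
rewrite !(expand_det_row _ ord0) !big_ord_recl big_ord0 /cofactor.
rewrite !big_ord0 !det_mx11 !mxE.
pose m (a b : nat) := M (inord a) (inord b).
have hM : forall a b : 'I_3, M a b = m a b by move=> a b; rewrite /m !inord_val.
rewrite /det3 !hM /=.
ring.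
Qed.
End Char3.

Lemma char3E (S : comNzRingType) (M : 'M[S]_3) : char_poly M =
  'X^3 - (tr3 M)%:P * 'X^2 + (e23 M)%:P * 'X - (det3 M)%:P.
Proof.
rewrite /char_poly det3E /det3 /char_poly_mx !mxE /=.
rewrite /tr3 /e23 /det3 !(rmorphD, rmorphN, rmorphB, rmorphM) /= mulr1n mulr0n.
ring.
Qed.
Section EPoly.
Variables (R : realType) (N : nat) (lam : 'I_N -> R).
Notation V := 'rV[R]_(6 * N).

Lemma cp_phi j a : cp (fun x : V => phi x j a).
Proof. by split; apply: ipX. Qed.

Lemma cp_Amat n0 i j : cp (fun x : V => Amat lam x n0 i j).
Proof.
have -> : (fun x : V => Amat lam x n0 i j) =
  (fun x => \sum_(a < N) ((lam a ^+ n0)%:C)%C * (phi x i a * (phi x j a)^*)).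
  by apply/funext => x; rewrite /Amat summxE; apply: eq_bigr => a _; rewrite !mxE.
apply: cp_sum => a; apply: cpM; first exact: cpC.
by apply: cpM; [exact: cp_phi|apply: cp_conj; exact: cp_phi].
Qed.

Lemma pp_Ltrunc K i j : pp (fun x : V => Ltrunc lam x K i j).
Proof.
have -> : (fun x : V => Ltrunc lam x K i j) =
  (fun x => (Cmat R i j)%:P + \sum_(n0 < K) (Amat lam x n0 i j)%:P * 'X^(n0.+1)).
  by apply/funext => x; rewrite mxE.
apply: ppD; first exact: ppK.
apply: pp_sum => n0; apply: ppM; last exact: ppK.
apply: ppC; exact: cp_Amat.
Qed.

Lemma pp_tr3 (F : V -> 'M[{poly R[i]}]_3) : (forall i j, pp (fun x => F x i j)) ->
  pp (fun x => tr3 (F x)).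
Proof. by move=> h; rewrite /tr3; apply: ppD; [apply: ppD|]; apply: h. Qed.

Lemma pp_e23 (F : V -> 'M[{poly R[i]}]_3) : (forall i j, pp (fun x => F x i j)) ->
  pp (fun x => e23 (F x)).
Proof.
by move=> h; rewrite /e23; repeat (apply: ppD || apply: ppN || apply: ppM); apply: h.
Qed.

Lemma pp_det3 (F : V -> 'M[{poly R[i]}]_3) : (forall i j, pp (fun x => F x i j)) ->
  pp (fun x => det3 (F x)).
Proof.
by move=> h; rewrite /det3; repeat (apply: ppD || apply: ppN || apply: ppM); apply: h.
Qed.

Lemma pk1 (x : V) K : pk lam x K 1 = tr3 (Ltrunc lam x K).
Proof.
rewrite /pk char3E !(coefD, coefN, coefCM, coefMC, coefXn, coefX, coefC) /=.
by rewrite expr1 mulr1 mulr0 sub0r subr0 addr0 mulN1r opprK.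
Qed.

Lemma pk2 (x : V) K : pk lam x K 2 = e23 (Ltrunc lam x K).
Proof.
rewrite /pk char3E !(coefD, coefN, coefCM, coefMC, coefXn, coefX, coefC) /=.
ring.
Qed.

Lemma pk3 (x : V) K : pk lam x K 3 = det3 (Ltrunc lam x K).
Proof.
rewrite /pk char3E !(coefD, coefN, coefCM, coefMC, coefXn, coefX, coefC) /=.
rewrite !mulr0 oppr0 !add0r.
by rewrite -signr_odd /= mulN1r opprK.
Qed.

Lemma ip_E k m : (0 < k <= 3)%N -> ispoly (fun x : V => E lam k m x).
Proof.
move=> hk.
have hp : pp (fun x : V => pk lam x m.+1 k).
  case: k hk => [|[|[|[|k]]]] //= _.
  - apply: pp_ext (pp_tr3 (pp_Ltrunc m.+1)) _ => x; by rewrite pk1.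
  - apply: pp_ext (pp_e23 (pp_Ltrunc m.+1)) _ => x; by rewrite pk2.
  - apply: pp_ext (pp_det3 (pp_Ltrunc m.+1)) _ => x; by rewrite pk3.
exact: (hp m.+1).1.
Qed.

End EPoly.
Lemma odd_coord N (j : 'I_3) (a : 'I_N) (b : 'I_2) : odd (coord_idx j a b) = odd b.
Proof. by rewrite /= oddD oddM /= addbF. Qed.

Lemma coord_idx_inj N (j j' : 'I_3) (a a' : 'I_N) (b b' : 'I_2) :
  coord_idx j a b = coord_idx j' a' b' -> (j = j' /\ a = a') /\ b = b'.
Proof.
move/(congr1 val) => /= h.
have hb := ltn_ord b; have hb' := ltn_ord b'.
have ha := ltn_ord a; have ha' := ltn_ord a'.
have hj := ltn_ord j; have hj' := ltn_ord j'.
have ebb : (b : nat) = b' by lia.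
have e1 : (a + N * j = a' + N * j')%N by lia.
have ejj : (j : nat) = j'.
  have := congr1 (fun t => (t %/ N)%N) e1.
  rewrite /= ![(N * _)%N]mulnC !divnDMl ?divn_small ?add0n //; lia.
have eaa : (a : nat) = a' by rewrite ejj in e1; lia.
by split; [split|]; apply: val_inj.
Qed.
Lemma coef1M (S : comNzRingType) (p q : {poly S}) :
  (p * q)`_1 = p`_0 * q`_1 + p`_1 * q`_0.
Proof. by rewrite coefM !big_ord_recl big_ord0 /= addr0. Qed.

Definition ef (S : comNzRingType) (k : nat) (M : 'M[S]_3) :=
  if k == 1%N then tr3 M else if k == 2%N then e23 M else det3 M.

Lemma ef_horner (S : comNzRingType) k (Mq : 'M[{poly S}]_3) (z : S) :
  ef k (\matrix_(i, l) (Mq i l).[z]) = (ef k Mq).[z].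
Proof.
rewrite /ef; case: ifP => _; last case: ifP => _;
  by rewrite /tr3 /e23 /det3 !mxE !(hornerD, hornerN, hornerM).
Qed.

Lemma pk_ef (R : realType) N (lam : 'I_N -> R) x K k : (0 < k <= 3)%N ->
  pk lam x K k = ef k (Ltrunc lam x K).
Proof.
case: k => [|[|[|[|k]]]] //= _; rewrite /ef /=.
- exact: pk1.
- exact: pk2.
- exact: pk3.
Qed.
Section Witness.
Variables (R : realType) (N : nat) (lam : 'I_N -> R).
Notation V := 'rV[R]_(6 * N).

Definition ystar : V := \row_(c < 6 * N) (if odd c then 0 else 1).

Variables (j0 : 'I_3) (a0 : 'I_N).
Definition c0 : 'I_(6 * N) := coord_idx j0 a0 0.

Definition dl (j : 'I_3) (a : 'I_N) : R := ((j == j0) && (a == a0))%:R.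

Lemma phi_line (s : R) j a :
  phi (s *: 'e_c0 + ystar) j a = ((1 + s * dl j a)%:C)%C.
Proof.
rewrite /phi !mxE /= add0n.
have -> : odd (2 * (a + N * j)) = false by rewrite oddM.
have -> : (coord_idx j a 1 == c0) = false.
  by apply/negbTE/eqP => /coord_idx_inj [_ /(congr1 val)].
have -> : (coord_idx j a 0 == c0) = (j == j0) && (a == a0).
  by apply/eqP/andP => [/coord_idx_inj [[-> ->] _]|[/eqP -> /eqP ->]].
by rewrite /dl /= mulr0 addr0 addrC.
Qed.

Lemma conj_realC (x : R) : ((x%:C)%C)^* = (x%:C)%C.
Proof. by apply/eqP; rewrite eq_complex /= oppr0 !eqxx. Qed.

Definition ei (i : 'I_3) : R := (i == j0)%:R.

Lemma Amat_line (s : R) n0 i k : Amat lam (s *: 'e_c0 + ystar) n0 i k =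
  ((\sum_b lam b ^+ n0 + lam a0 ^+ n0 * (s * (ei i + ei k) + s ^+ 2 * (ei i * ei k)))%:C)%C.
Proof.
rewrite /Amat summxE.
under eq_bigr do rewrite !mxE !phi_line conj_realC -!rmorphM.
rewrite -rmorph_sum; congr (_%:C)%C.
have dlE : forall i b, dl i b = ei i * (b == a0)%:R.
  by move=> i' b; rewrite /dl /ei -natrM mulnb.
under eq_bigr => b _.
  rewrite !dlE; have -> : lam b ^+ n0 * ((1 + s * (ei i * (b == a0)%:R)) *
     (1 + s * (ei k * (b == a0)%:R))) = lam b ^+ n0 + (b == a0)%:R * (lam b ^+ n0 *
     (s * (ei i + ei k) + s ^+ 2 * (ei i * ei k))).
    by case: (b == a0) => /=; ring.
  over.
rewrite big_split /=; congr (_ + _).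
rewrite (bigD1 a0) //= eqxx mul1r big1 ?addr0 // => b /negbTE ->.
by rewrite mul0r.
Qed.

Definition Gp K : {poly R[i]} := \sum_(n0 < K) (((\sum_b lam b ^+ n0)%:C)%C)%:P * 'X^(n0.+1).
Definition gp K : {poly R[i]} := \sum_(n0 < K) (((lam a0 ^+ n0)%:C)%C)%:P * 'X^(n0.+1).

Lemma Ltrunc_line (s : R) K i k : Ltrunc lam (s *: 'e_c0 + ystar) K i k =
  (Cmat R i k)%:P + Gp K +
  ((((s * (ei i + ei k) + s ^+ 2 * (ei i * ei k)))%:C)%C)%:P * gp K.
Proof.
rewrite mxE -addrA; congr (_ + _).
under eq_bigr do rewrite Amat_line !rmorphD mulrDl.
rewrite big_split /=; congr (_ + _).
rewrite /gp mulr_sumr; apply: eq_bigr => n0 _.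
by rewrite !rmorphM /=; ring.
Qed.

Definition rc (x : R) : {poly (complex R)} := ((x%:C)%C)%:P.

Definition Mp K : 'M[{poly {poly (complex R)}}]_3 := \matrix_(i, k)
  (((Cmat R i k)%:P + Gp K)%:P + (rc (ei i + ei k) * gp K)%:P * 'X
   + (rc (ei i * ei k) * gp K)%:P * 'X^2).

Lemma Ltrunc_lineM (s : R) K : Ltrunc lam (s *: 'e_c0 + ystar) K =
  \matrix_(i, k) ((Mp K i k).[(rc s)]).
Proof.
apply/matrixP => i k; rewrite Ltrunc_line !mxE /rc.
rewrite !(hornerD, hornerM, hornerC, hornerX, hornerXn).
rewrite !(rmorphD, rmorphM, rmorphXn) /=.
ring.
Qed.

Lemma coef_horner_real (P : {poly {poly R[i]}}) (s : R) (i : nat) :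
  complex.Re ((P.[(rc s)])`_i) =
  (\poly_(d < size P) complex.Re ((P`_d)`_i)).[s].
Proof.
rewrite /rc horner_coef horner_poly coef_sum raddf_sum; apply: eq_bigr => d _.
rewrite -rmorphXn -rmorphXn coefMC.
move: (P`_d`_i) (s ^+ d) => z r; case: z => a b /=.
by rewrite mulr0 subr0.
Qed.

Lemma D_E_witness k m : (0 < k <= 3)%N ->
  'D_('e_c0) (E lam k m) ystar =
  complex.Re (((ef k (Mp m.+1))`_1)`_m.+1).
Proof.
move=> hk.
set P := ef k (Mp m.+1).
have hq : forall s : R, E lam k m (s *: 'e_c0 + ystar) =
    (\poly_(d < size P) complex.Re ((P`_d)`_m.+1)).[s].
  move=> s; rewrite /E pk_ef // Ltrunc_lineM ef_horner.
  exact: coef_horner_real.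
have [_ ->] := line_derive hq.
rewrite coef_poly; case: ltnP => // hs.
by rewrite (nth_default _ hs) coef0.
Qed.

Definition dval (k : nat) : R :=
  if k == 1%N then 2 else if k == 2%N then
    (if j0 == i0 then -2 else if j0 == i1 then 2 else 0)
  else (if j0 == i2 then -2 else 0).

Lemma Mp_coef1 K k : (0 < k <= 3)%N ->
  (ef k (Mp K))`_1 = rc (dval k) * gp K.
Proof.
move=> hk.
have c0E : forall i l, (Mp K i l)`_0 = (Cmat R i l)%:P + Gp K.
  by move=> i l; rewrite mxE !coefD coefC coefMX coefMXn /= !addr0.
have c1E : forall i l, (Mp K i l)`_1 = rc (ei i + ei l) * gp K.
  by move=> i l; rewrite mxE !coefD coefC coefMX coefMXn /= coefC add0r addr0.
have hj : j0 = i0 \/ j0 = i1 \/ j0 = i2.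
  case: j0 => [[|[|[|//]]]] /= hh; [left|right; left|right; right]; exact: val_inj.
case: k hk => [|[|[|[|k]]]] //= _; rewrite /ef /= /tr3 /e23 /det3;
  rewrite !(coefD, coefN, coef1M, coef0M) ?c0E ?c1E /dval /ei /rc ?mxE /=;
  case: hj => [->|[->|->]] /=;
  rewrite ?(rmorphD, rmorphN, rmorphM, rmorph1, rmorph0) /=; ring.
Qed.

Lemma gp_coef m : (gp m.+1)`_m.+1 = ((lam a0 ^+ m)%:C)%C.
Proof.
rewrite /gp coef_sum big_ord_recr /= big1 ?add0r.
  by rewrite coefCM coefXn eqxx mulr1.
move=> i _; rewrite coefCM coefXn eqSS.
by rewrite (_ : (m == i) = false) ?mulr0 //; apply/negbTE; rewrite neq_ltn ltn_ord orbT.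
Qed.

Lemma D_E_val k m : (0 < k <= 3)%N ->
  'D_('e_c0) (E lam k m) ystar = dval k * lam a0 ^+ m.
Proof.
move=> hk; rewrite D_E_witness // Mp_coef1 // /rc coefCM gp_coef -rmorphM.
by [].
Qed.
End Witness.
Lemma sum_split (R : realType) (F : nat -> R) K N :
  \sum_(r < K * N) F r = \sum_(k < K) \sum_(m < N) F (k * N + m)%N.
Proof.
elim: K => [|K ih]; first by rewrite mul0n !big_ord0.
rewrite big_ord_recr /= -ih mulSnr.
rewrite -!(big_mkord xpredT).
rewrite (@big_cat_nat _ _ _ (K * N)) //=; last exact: leq_addr.
congr (_ + _).
rewrite -{1}[(K * N)%N]add0n big_addn addKn big_mkord.
by apply: eq_bigr => i _; rewrite addnC.
Qed.
Section Main.
Variables (R : realType) (N' : nat) (lam : 'I_N'.+1 -> R).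
Local Notation N := N'.+1.
Local Notation V := 'rV[R]_(6 * N).

Definition jof (r : 'I_(3 * N)) : 'I_3 := inord (r %/ N).
Definition aof (r : 'I_(3 * N)) : 'I_N := inord (r %% N).
Definition colsel (r : 'I_(3 * N)) : 'I_(6 * N) := coord_idx (jof r) (aof r) 0.
Definition JS (x : V) : 'M[R]_(3 * N) := colsub colsel (Ejacobian lam x).
Definition Dt (x : V) : R := \det (JS x).

Lemma rowk_ok (r : 'I_(3 * N)) : (0 < (r %/ N).+1 <= 3)%N.
Proof. by rewrite /= ltnS -ltnS ltn_divLR // ltn_ord. Qed.

Lemma ip_det n m (F : 'rV[R]_m -> 'M[R]_n) :
  (forall i j, ispoly (fun x => F x i j)) -> ispoly (fun x => \det (F x)).
Proof.
move=> h; rewrite /determinant; apply: ip_sum => s.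
apply: ipM; first exact: ipC.
by apply: ip_prod => i; apply: h.
Qed.

Lemma ip_Dt : ispoly Dt.
Proof.
apply: ip_det => r c.
have -> : (fun x => JS x r c) =
  (fun x => 'D_('e_(colsel c)) (E lam (r %/ N).+1 (r %% N)) x).
  by apply/funext => x; rewrite /JS !mxE.
apply: ip_deriv; exact: ip_E (rowk_ok r).
Qed.

Lemma JS_ystar r c : JS (ystar R N) r c =
  dval R (jof c) (r %/ N).+1 * lam (aof c) ^+ (r %% N).
Proof. by rewrite /JS !mxE D_E_val // rowk_ok. Qed.


Lemma cof_lt (j : 'I_3) (a : 'I_N) : (j * N + a < 3 * N)%N.
Proof. have := ltn_ord j; have := ltn_ord a; nia. Qed.
Definition cof j a : 'I_(3 * N) := Ordinal (cof_lt j a).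

Lemma jof_cof j a : jof (cof j a) = j.
Proof.
by apply: val_inj; rewrite /jof /= divnMDl // divn_small // addn0 inordK.
Qed.

Lemma aof_cof j a : aof (cof j a) = a.
Proof.
apply: val_inj; rewrite /aof /= modnMDl modn_small // inordK //.
Qed.

Lemma poly_zero_roots (p : {poly R}) : injective lam ->
  (size p <= N)%N -> (forall a, p.[lam a] = 0) -> p = 0.
Proof.
move=> hinj hs hr.
apply: (@roots_geq_poly_eq0 _ p [seq lam a | a <- enum 'I_N]).
- by apply/allP => z /mapP [a _ ->]; apply/eqP; exact: hr.
- by rewrite map_inj_uniq // enum_uniq.
- by rewrite size_map size_enum_ord.
Qed.

Lemma Dt_ystar : injective lam -> Dt (ystar R N) != 0.
Proof.
move=> hinj; apply/negP => /det0P [w wn0 hw].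
have h3 : (0 < 3 * N)%N by rewrite muln_gt0.
pose r0 : 'I_(3 * N) := Ordinal h3.
pose wn (i : nat) := w 0 (insubd r0 i).
have wnE : forall r : 'I_(3 * N), wn r = w 0 r by move=> r; rewrite /wn valKd.
pose P (k : nat) : {poly R} := \poly_(m < N) wn (k * N + m)%N.
have inner : forall (j : 'I_3) (a : 'I_N) (k : nat),
  \sum_(m < N) wn (k * N + m)%N * (dval R j ((k * N + m) %/ N).+1 *
     lam a ^+ ((k * N + m) %% N)) = dval R j k.+1 * (P k).[lam a].
  move=> j a k; rewrite horner_poly mulr_sumr; apply: eq_bigr => m _.
  rewrite divnMDl // divn_small // addn0 modnMDl modn_small //.
  by rewrite mulrCA.
have key : forall (j : 'I_3) (a : 'I_N),
  dval R j 1 * (P 0%N).[lam a] + dval R j 2 * (P 1%N).[lam a]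
  + dval R j 3 * (P 2%N).[lam a] = 0.
  move=> j a.
  have h0 := congr1 (fun M : 'M[R]_(1, 3 * N) => M 0 (cof j a)) hw; move: h0; rewrite !mxE /=.
  under eq_bigr do rewrite JS_ystar jof_cof aof_cof -wnE.
  rewrite (sum_split (fun i => wn i * (dval R j (i %/ N).+1 * lam a ^+ (i %% N))) 3 N).
  under eq_bigr => k _ do rewrite inner.
  rewrite !big_ord_recl big_ord0 addr0 /=.
  by rewrite addrA.
have hP : forall k, (k < 3)%N -> P k = 0.
  move=> k hk; apply: poly_zero_roots hinj _ _; first exact: size_poly.
  move=> a.
  have k0 := key i0 a; have k1 := key i1 a; have k2 := key i2 a.
  move: k0 k1 k2; rewrite /dval /=.
  case: k hk => [|[|[|//]]] _ /=; lra.
have wz : forall r : 'I_(3 * N), w 0 r = 0.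
  move=> r; rewrite -wnE.
  have hr : (r %/ N < 3)%N by rewrite ltn_divLR // ltn_ord.
  have := congr1 (fun p : {poly R} => p`_(r %% N)) (hP _ hr).
  rewrite /= coef_poly ltn_mod /= coef0 -divn_eq.
  by [].
move/negP: wn0; apply; apply/eqP/rowP => c.
by rewrite wz mxE.
Qed.
End Main.

Unset Implicit Arguments.
Set Strict Implicit.

Theorem lemma5 (R : realType) (N : nat) (lam : 'I_N -> R)
  (hN : (0 < N)%N) (hinj : injective lam) (hnz : forall a, lam a != 0) :
  exists U : set 'rV[R]_(6 * N),
    open U /\ dense U /\
    forall x, U x -> \rank (Ejacobian lam x) = (3 * N)%N.
Proof.
case: N lam hinj hnz hN => [//|N'] lam hinj _ _.
have ipD := ip_Dt lam.
exists [set x | Dt lam x != 0].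
split; [|split].
- have -> : [set x | Dt lam x != 0] = Dt lam @^-1` [set y | y != 0] by [].
  apply: open_comp; last exact: open_neq.
  by move=> x _; exact: ip_cont ipD x.
- move=> O [z Oz] oO.
  set w := ystar R N'.+1 - z.
  have [q hq] := ip_line ipD z w.
  have q1 : q.[1] != 0.
    by rewrite -hq scale1r /w subrK; exact: Dt_ystar.
  have qn0 : q != 0 by apply: contraNneq q1 => ->; rewrite horner0.
  have := oO z Oz; move/nbhs_ballP => [e /= e0 he].
  set nw := `|w|.
  have nw0 : 0 <= nw by exact: normr_ge0.
  pose dl := e / (nw + 1).
  have dl0 : 0 < dl by rewrite divr_gt0 // ltr_wpDl.
  have : ~~ all (root q) [seq dl / (i.+2)%:R | i <- iota 0 (size q)].
    apply/negP => hall; apply: (negP qn0); apply/eqP.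
    apply: roots_geq_poly_eq0 hall _ _; last by rewrite size_map size_iota.
    rewrite map_inj_uniq ?iota_uniq // => i j /(mulfI (lt0r_neq0 dl0)).
    move/invr_inj/eqP; rewrite eqr_nat eqSS => /eqP.
    by case.
  case/allPn => s /mapP [i _ ->] hroot.
  exists (dl / (i.+2)%:R *: w + z); split; last by rewrite /= hq.
  apply: he; rewrite -ball_normE /=.
  rewrite opprD addrCA subrr addr0 normrN mx_normZ -/nw.
  have k1 : 1 < (i.+2)%:R :> R by rewrite ltr1n.
  have k0 : 0 < (i.+2)%:R :> R by rewrite ltr0n.
  rewrite ger0_norm; last by rewrite divr_ge0 // ltW.
  have sE : dl / (i.+2)%:R * (nw + 1) = e / (i.+2)%:R.
    by rewrite /dl; field; apply/andP; split; rewrite lt0r_neq0 // ltr_wpDl.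
  apply: (@le_lt_trans _ _ (dl / (i.+2)%:R * (nw + 1))).
    by rewrite ler_pM2l ?lerDl // divr_gt0.
  by rewrite sE ltr_pdivrMr // ltr_pMr.
- move=> x /= hx.
  apply/eqP; rewrite eqn_leq rank_leq_row /=.
  have hu : JS lam x \in unitmx by rewrite unitmxE unitfE.
  rewrite -{1}(mxrank_unit hu) /JS -[Ejacobian lam x]mulmx1 -mulmx_colsub.
  rewrite [X in (_ <= \rank X)%N]mulmx1; exact: mxrankM_maxl.
Qed.
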